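(* Let $M$ be a module over a ring. For all $X,A,B\subseteq M$, $$X\oplus(A\cap B)=\bigcap_{Y\subseteq X}\Big((Y\oplus A)\cup\big((X\setminus Y)\oplus B\big)\Big).$$
   Context: For $A,B\subseteq M$, the Minkowski addition is $A\oplus B=\{a+b : a\in A, b\in B\}$. *)

(* Defs.v *)
From HB Require Import structures.
From mathcomp Require Import all_boot all_order all_algebra.
From mathcomp Require Import boolp classical_sets.
Set Implicit Arguments. Unset Strict Implicit. Unset Printing Implicit Defensive.
Import GRing.Theory.
Local Open Scope classical_set_scope.
Local Open Scope ring_scope.

Definition minkowski (V : zmodType) (A B : set V) : set V :=
  [set a + b | a in A & b in B].

(* Main.v *)
Require Import Defs.
From HB Require Import structures.
From mathcomp Require Import all_boot all_order all_algebra.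
From mathcomp Require Import boolp classical_sets.
Local Open Scope classical_set_scope.
Local Open Scope ring_scope.
Import GRing.Theory.

Theorem mainTheorem16 (R : pzRingType) (M : lmodType R) (X A B : set M) :
  minkowski X (A `&` B) =
  \bigcap_(Y in [set Y : set M | Y `<=` X])
     (minkowski Y A `|` minkowski (X `\` Y) B).
Proof.
apply/seteqP; split => z.
- move=> [x Xx [c [Ac Bc] <-]] Y /= YX.
  have [Yx|nYx] := pselect (Y x).
    by left; exists x => //; exists c.
  by right; exists x => //; exists c.
- move=> H.
  apply: contrapT => Hn.
  have := H [set x | X x /\ B (z - x)] (fun x (h : X x /\ B (z - x)) => h.1).
  case.
  + move=> [y [Xy Bzy] [a Aa E]]; subst z.
    apply: Hn; exists y => //; exists a => //.
    split => //. by move: Bzy; rewrite [_ + a - _]addrC addKr.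
  + move=> [x [Xx nx] [b Bb E]]; subst z.
    apply: nx; split => //. by rewrite [_ + b - _]addrC addKr.
Qed.
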